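(* Let $X$ be a set with at least two elements and let $A_1,\dots,A_m$ be finite subsets of the free monoid $\langle X\rangle$ such that all elements of $A_i$ have the same degree $n_i$ ($i=1,\dots,m$). Then there exist an integer $t\geq\max\{n_i\mid 1\le i\le m\}$ and elements $\nu_1,\dots,\nu_m\in\langle X\rangle$ with $\deg\nu_i=t-n_i$ such that the sets $A_1\nu_1,\dots,A_m\nu_m$ are pairwise disjoint.
   Context: The degree of a monomial $x_1x_2\cdots x_n\in\langle X\rangle$ ($x_i\in X$) is $n$. $A_i\nu_i=\{a\nu_i\mid a\in A_i\}$. *)

(* Defs.v *)
From Stdlib Require List.
From mathcomp Require Import all_boot.
Set Implicit Arguments. Unset Strict Implicit. Unset Printing Implicit Defensive.

(* Free monoid <X> on a type X: words are sequences (seq X), product is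
   concatenation, degree is length. *)
Definition word (X : Type) := seq X.
Definition deg (X : Type) (w : word X) : nat := size w.

Definition rmul (X : Type) (A : seq (word X)) (nu : word X) : seq (word X) :=
  map (fun a => a ++ nu) A.

Definition words_disjoint (X : Type) (B C : seq (word X)) : Prop :=
  forall w, List.In w B -> List.In w C -> False.

(* Main.v *)
Require Import Defs.
From mathcomp Require Import all_boot.
From mathcomp Require Import zify.
Set Implicit Arguments.

Lemma In_map_ex (T U : Type) (f : T -> U) (s : seq T) w :
  List.In w (map f s) -> exists a, List.In a s /\ w = f a.
Proof.
elim: s => [|b s IH] //= [<-|/IH [a [Ha ->]]].
  by exists b; split; [left|].
by exists a; split; [right|].
Qed.

Definition code (X : Type) (x y : X) (m i : nat) : seq X := nseq i y ++ nseq (m - i) x.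

Lemma code_neq (X : Type) (x y : X) (m i j : nat) :
  x <> y -> i < j -> i < m -> code x y m i <> code x y m j.
Proof.
move=> xy ij im E; apply: xy.
have := congr1 (fun s => nth x s i) E; rewrite /= /code !nth_cat !size_nseq ltnn ij.
rewrite !nth_nseq ij subnn; by case: ifP.
Qed.

Theorem mainTheorem6 (X : Type) (hX : exists x y : X, x <> y)
  (m : nat) (A : 'I_m -> seq (word X)) (n : 'I_m -> nat)
  (hdeg : forall i a, List.In a (A i) -> deg a = n i) :
  exists t : nat, (forall i, n i <= t) /\
    exists nu : 'I_m -> word X,
      (forall i, deg (nu i) = t - n i) /\
      (forall i j, i <> j -> words_disjoint (rmul (A i) (nu i)) (rmul (A j) (nu j))).
Proof.
case: hX => x [y xy].
pose N := \max_i n i.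
have hN : forall i, n i <= N by move=> i; apply: leq_bigmax.
clearbody N.
exists (N + m); split; first by move=> i; have := hN i; lia.
exists (fun i => nseq (N - n i) x ++ code x y m i); split.
  move=> i; rewrite /deg size_cat size_nseq /code size_cat !size_nseq.
  have := hN i; have := ltn_ord i; lia.
have key : forall (i j : 'I_m) w, (i : nat) < j ->
    List.In w (rmul (A i) (nseq (N - n i) x ++ code x y m i)) ->
    List.In w (rmul (A j) (nseq (N - n j) x ++ code x y m j)) -> False.
  move=> i j w ij Hi Hj; case: (In_map_ex _ _ _ Hi) => a [Ha Ew]; case: (In_map_ex _ _ _ Hj) => b [Hb E]; subst w.
  have := congr1 (drop N) E; rewrite (catA a) (catA b) !drop_size_cat.
  - move=> Ec; exact: (code_neq _ _ _ xy ij (ltn_ord i) Ec).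
  - rewrite size_cat size_nseq; have := hdeg _ _ Hb; rewrite /deg => ->.
    have := hN j; lia.
  - rewrite size_cat size_nseq; have := hdeg _ _ Ha; rewrite /deg => ->.
    have := hN i; lia.
move=> i j nij w Hi Hj.
case: (ltngtP i j) => [ij|ji|/val_inj //].
  exact: (key i j w ij).
exact: (key j i w ji).
Qed.
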